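(* Let $p(x,y)$ be a real polynomial and $A\in\mathbb{N}_0^2$ such that the exponent vectors $k$ of the terms of $p$ take exactly two distinct values $B_1^A<B_2^A$ of $\langle A,k\rangle$, i.e. $p=\varphi_1^A+\varphi_2^A$ where $\varphi_j^A$ is the sum of the terms of $p$ with $\langle A,k\rangle=B_j^A$. Then there is no $\bar A\in\mathbb{N}_0^2$ with $\bar A\neq A$ such that the main $\bar A$-quasi-homogeneous form of $p$ contains more than two terms.
   Context: $\mathbb{N}=\{1,2,\dots\}$; $\mathbb{N}_0^2$ is the set of $(A_1,A_2)\in\mathbb{N}^2$ with $\gcd(A_1,A_2)=1$. The main $\bar A$-quasi-homogeneous form of $p$ is the sum of the terms of $p$ whose exponent vectors $k$ minimize $\langle\bar A,k\rangle$ over the set of exponent vectors of terms of $p$ with nonzero coefficients. *)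

(* Defs.v *)
From HB Require Import structures.
From mathcomp Require Import all_boot all_order all_algebra.
From mathcomp Require Import multinomials.mpoly.
Set Implicit Arguments. Unset Strict Implicit. Unset Printing Implicit Defensive.
Import Order.TTheory GRing.Theory Num.Theory.

(* Bivariate polynomials p(x,y) are elements of {mpoly R[2]}; a monomial
   k : 'X_{1..2} has exponents k 0 (of x) and k 1 (of y). *)
Definition i0 : 'I_2 := @Ordinal 2 0 isT.
Definition i1 : 'I_2 := @Ordinal 2 1 isT.

(* N_0^2 : pairs (A1,A2) of positive naturals with gcd 1 *)
Definition inN02 (A : nat * nat) : bool :=
  [&& 0 < A.1, 0 < A.2 & coprime A.1 A.2].

Definition wt (A : nat * nat) (k : 'X_{1..2}) : nat :=
  A.1 * k i0 + A.2 * k i1.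

Definition exps (R : realFieldType) (p : {mpoly R[2]}) : seq 'X_{1..2} :=
  msupp p.

Definition main_form_exps (R : realFieldType) (Abar : nat * nat)
    (p : {mpoly R[2]}) : seq 'X_{1..2} :=
  [seq k <- exps p | all (fun k' => wt Abar k <= wt Abar k') (exps p)].

(* Main.v *)
Require Import Defs.
From HB Require Import structures.
From mathcomp Require Import all_boot all_order all_algebra.
From mathcomp Require Import multinomials.mpoly.
From mathcomp Require Import zify ring.

Lemma det_aux (a1 a2 b1 b2 x y d e : nat) :
  0 < d -> 0 < e -> a2 * e = a1 * d -> b2 * e = b1 * d -> a1 * b2 = a2 * b1.
Proof.
move=> d0 e0 h1 h2.
have: a1 * b2 * (d * e) = a2 * b1 * (d * e).
  have -> : a1 * b2 * (d * e) = (a1 * d) * (b2 * e) by ring.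
  have -> : a2 * b1 * (d * e) = (a2 * e) * (b1 * d) by ring.
  by rewrite h1 h2.
move/eqP; rewrite eqn_pmul2r ?muln_gt0 ?d0 ?e0 //; by move/eqP.
Qed.

Lemma det_lemma (a1 a2 b1 b2 x y x' y' : nat) :
  0 < a1 -> 0 < a2 ->
  a1 * x + a2 * y = a1 * x' + a2 * y' ->
  b1 * x + b2 * y = b1 * x' + b2 * y' ->
  (x != x') -> a1 * b2 = a2 * b1.
Proof.
move=> a10 a20 h1 h2 hx.
case: (ltngtP x x') hx => // hlt _.
- have hy : y' < y.
    case: (leqP y y') => // hle.
    have : a2 * y <= a2 * y' by rewrite leq_mul2l hle orbT.
    have : a1 * x < a1 * x' by rewrite ltn_pmul2l.
    lia.
  apply: (@det_aux a1 a2 b1 b2 0 0 (x' - x) (y - y')); try lia.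
- have hy : y < y'.
    case: (leqP y' y) => // hle.
    have : a2 * y' <= a2 * y by rewrite leq_mul2l hle orbT.
    have : a1 * x' < a1 * x by rewrite ltn_pmul2l.
    lia.
  apply: (@det_aux a1 a2 b1 b2 0 0 (x - x') (y' - y)); try lia.
Qed.

Lemma copr_eq (A Ab : nat * nat) :
  inN02 A -> inN02 Ab -> A.1 * Ab.2 = A.2 * Ab.1 -> A = Ab.
Proof.
case: A => a1 a2; case: Ab => b1 b2 /=.
rewrite /inN02 /= => /and3P[a10 a20 ca] /and3P[b10 b20 cb] h.
have d1 : a1 %| b1.
  by rewrite -(Gauss_dvdr _ ca) -h dvdn_mulr.
have d2 : b1 %| a1.
  by rewrite -(Gauss_dvdl _ cb) h dvdn_mull.
have e1 : a1 = b1 by apply/eqP; rewrite eqn_dvd d1 d2.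
subst b1.
have : a1 * b2 = a1 * a2 by rewrite h mulnC.
by move/eqP; rewrite eqn_pmul2l // => /eqP ->.
Qed.

Lemma mnm2_eq (k k' : 'X_{1..2}) : k i0 = k' i0 -> k i1 = k' i1 -> k = k'.
Proof.
move=> h0 h1; apply/mnmP => -[[|[|i]] hi].
- by rewrite (_ : Ordinal hi = i0) //; apply: val_inj.
- by rewrite (_ : Ordinal hi = i1) //; apply: val_inj.
- by [].
Qed.

Lemma same_wt (A Ab : nat * nat) (k k' : 'X_{1..2}) :
  inN02 A -> inN02 Ab -> Ab <> A ->
  wt A k = wt A k' -> wt Ab k = wt Ab k' -> k = k'.
Proof.
move=> hA hAb hne h1 h2.
have hA' := hA; move: hA' => /and3P[a10 a20 _].
case: (boolP (k i0 == k' i0)) => hx.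
- apply: mnm2_eq; first exact/eqP.
  move: h1; rewrite /wt (eqP hx) => /eqP; rewrite eqn_add2l eqn_pmul2l //.
  by move/eqP.
- exfalso; apply: hne; apply/esym; apply: copr_eq => //.
  exact: (@det_lemma A.1 A.2 Ab.1 Ab.2 (k i0) (k i1) (k' i0) (k' i1) a10 a20 h1 h2 hx).
Qed.

Theorem mainTheorem13 (R : realFieldType) (p : {mpoly R[2]}) (A : nat * nat)
  (B1 B2 : nat) :
  inN02 A ->
  B1 < B2 ->
  (exists2 k, k \in exps p & wt A k = B1) ->
  (exists2 k, k \in exps p & wt A k = B2) ->
  (forall k, k \in exps p -> wt A k = B1 \/ wt A k = B2) ->
  forall Abar : nat * nat, inN02 Abar -> Abar <> A ->
    size (main_form_exps Abar p) <= 2.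
Proof.
move=> hA _ _ _ hB Ab hAb hne.
set s := main_form_exps Ab p.
have us : uniq s by rewrite filter_uniq // /exps msupp_uniq.
have inS : forall k, k \in s -> k \in exps p /\ all (fun k' => wt Ab k <= wt Ab k') (exps p).
  by move=> k; rewrite mem_filter => /andP[h1 h2].
rewrite -(size_map (wt A)).
apply: (@leq_trans (size [:: B1; B2])); last by [].
apply: uniq_leq_size.
- rewrite (map_inj_in_uniq) // => k k' hk hk' hw.
  have [k1 a1] := inS _ hk; have [k2 a2] := inS _ hk'.
  apply: (@same_wt A Ab k k' hA hAb hne hw).
  apply/eqP; rewrite eqn_leq.
  by rewrite (allP a1 _ k2) (allP a2 _ k1).
- move=> b /mapP[k hk ->].
  have [k1 _] := inS _ hk.
  by rewrite !inE; case: (hB _ k1) => ->; rewrite eqxx ?orbT.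
Qed.
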